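(* Let $T:\mathbb{R}^n\to\mathbb{R}^n$ be an averaged operator with $\mathrm{Fix}(T)\neq\emptyset$ and $\lim_{\|x\|\to\infty}\|x-T(x)\|=\infty$. Let $\{x^k\}$ be generated by the Safe-L2O method (described in the context) with $\alpha\in(0,1)$, where the safeguard sequence $\{\mu_k\}$ is updated by any one of the five schemes GS($\theta$), RT, AA, EMA($\theta$), RM($m$) defined in the context (with $\theta\in(0,1)$, $m\in\mathbb{N}$). Then: if the inequality $\|y^k-T(y^k)\|\le\alpha\mu_k$ holds for infinitely many $k$, we have $\mu_k\to0$. Consequently $\lim_{k\to\infty}d_{\mathrm{Fix}(T)}(x^k)=0$, and if $\{x^k\}$ has exactly one cluster point then $\{x^k\}$ converges to a point of $\mathrm{Fix}(T)$.
   Context: $\|\cdot\|$ is the Euclidean norm; $\mathrm{Fix}(T):=\{x:T(x)=x\}$; $d_C(x):=\inf\{\|x-y\|:y\in C\}$. $T$ is averaged if $T=(1-\lambda)\mathrm{Id}+\lambda Q$ with $\lambda\in(0,1)$ and $Q$ 1-Lipschitz. Safe-L2O method: fix maps $\mathcal{L}_k:\mathbb{R}^n\to\mathbb{R}^n$, the fallback operator $T$, $\alpha\in(0,1)$, $x^1\in\mathbb{R}^n$; set $\mu_1:=\|x^1-T(x^1)\|$. For $k=1,2,\dots$: $y^k:=\mathcal{L}_k(x^k)$; if $\|y^k-T(y^k)\|\le\alpha\mu_k$ set $x^{k+1}:=y^k$, else $x^{k+1}:=T(x^k)$; then compute $\mu_{k+1}$ by the chosen scheme. Write $r_j:=\|x^j-T(x^j)\|$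 and say that ''sufficient descent occurs at step $k$'' if $r_{k+1}\le\alpha\mu_k$. The schemes (in each, $\mu_{k+1}:=\mu_k$ whenever sufficient descent does not occur at step $k$): GS($\theta$): if sufficient descent occurs at step $k$, $\mu_{k+1}:=\theta\mu_k$. RT: if sufficient descent occurs at step $k$, $\mu_{k+1}:=r_{k+1}$. AA: with a counter $m_1:=0$; if sufficient descent occurs at step $k$, $\mu_{k+1}:=\frac{1}{m_k+1}(r_{k+1}+m_k\mu_k)$ and $m_{k+1}:=m_k+1$; otherwise $m_{k+1}:=m_k$. EMA($\theta$): if sufficient descent occurs at step $k$, $\mu_{k+1}:=\theta r_{k+1}+(1-\theta)\mu_k$. RM($m$): if sufficient descent occurs at step $k$, $\mu_{k+1}:=\max_{j\in\Xi_k} r_{j+1}$, where $\Xi_k$ is the set of the most recent $m$ indices $j\le k$ at which sufficient descent occurred (all such indices if there are fewer than $m$). *)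

(* Defs.v *)
From Stdlib Require Import Reals Lra List.
From mathcomp Require Import ssreflect ssrfun ssrbool eqtype ssrnat seq fintype bigop.
Open Scope R_scope.

Definition vec (n : nat) := 'I_n -> R.

Definition vsub {n} (x y : vec n) : vec n := fun i => x i - y i.

Definition norm {n} (x : vec n) : R :=
  sqrt (\big[Rplus/0]_(i < n) (x i * x i)).

Definition nonexpansive {n} (Q : vec n -> vec n) : Prop :=
  forall x y, norm (vsub (Q x) (Q y)) <= norm (vsub x y).

Definition averaged {n} (T : vec n -> vec n) : Prop :=
  exists (lam : R) (Q : vec n -> vec n),
    0 < lam < 1 /\ nonexpansive Q /\
    forall x i, T x i = (1 - lam) * x i + lam * Q x i.

Definition Fix {n} (T : vec n -> vec n) (x : vec n) : Prop := T x = x.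

Definition res {n} (T : vec n -> vec n) (x : vec n) : R := norm (vsub x (T x)).

Definition is_inf (S : R -> Prop) (r : R) : Prop :=
  (forall s, S s -> r <= s) /\ (forall b, (forall s, S s -> b <= s) -> b <= r).

(* the set {||x - y|| : y in C}; d_C(x) is its infimum *)
Definition dists {n} (C : vec n -> Prop) (x : vec n) (s : R) : Prop :=
  exists y, C y /\ s = norm (vsub x y).

Definition cluster_point {n} (x : nat -> vec n) (z : vec n) : Prop :=
  forall eps, 0 < eps -> forall N : nat, exists k, (N <= k)%nat /\ norm (vsub (x k) z) < eps.

Definition converges_to {n} (x : nat -> vec n) (z : vec n) : Prop :=
  forall eps, 0 < eps -> exists N : nat, forall k, (N <= k)%nat -> norm (vsub (x k) z) < eps.

Inductive scheme : Type :=
| GS (theta : R)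
| RT
| AA
| EMA (theta : R)
| RM (m : nat).

Definition scheme_params (s : scheme) : Prop :=
  match s with
  | GS theta => 0 < theta < 1
  | EMA theta => 0 < theta < 1
  | RM m => (1 <= m)%nat
  | _ => True
  end.

Section Update.
Context {n : nat} (T : vec n -> vec n) (alpha : R) (x : nat -> vec n) (mu : nat -> R).

Definition descent_dec (k : nat) : {res T (x k.+1) <= alpha * mu k} + {~ res T (x k.+1) <= alpha * mu k} :=
  Rle_dec (res T (x k.+1)) (alpha * mu k).

Fixpoint aa_count (k : nat) : nat :=
  match k with
  | O => O
  | S k' => match k' with
            | O => O
            | _ => (aa_count k' + (if descent_dec k' then 1 else 0))%nat
            end
  end.

Fixpoint descent_indices (k : nat) : list nat :=
  match k with
  | O => nil
  | S k' => if descent_dec (S k') then S k' :: descent_indices k' else descent_indices k'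
  end.

Definition Xi (m k : nat) : list nat := firstn m (descent_indices k).

Definition mu_next (s : scheme) (k : nat) : R :=
  if descent_dec k then
    match s with
    | GS theta => theta * mu k
    | RT => res T (x k.+1)
    | AA => (res T (x k.+1) + INR (aa_count k) * mu k) / (INR (aa_count k) + 1)
    | EMA theta => theta * res T (x k.+1) + (1 - theta) * mu k
    | RM m => fold_right Rmax 0 (map (fun j => res T (x j.+1)) (Xi m k))
    end
  else mu k.
End Update.

Definition safe_l2o {n} (T : vec n -> vec n) (L : nat -> vec n -> vec n)
  (alpha : R) (s : scheme) (x y : nat -> vec n) (mu : nat -> R) : Prop :=
  mu 1%nat = res T (x 1%nat) /\
  forall k : nat, (1 <= k)%nat ->
    y k = L k (x k) /\
    x k.+1 = (if Rle_dec (res T (y k)) (alpha * mu k) then y k else T (x k)) /\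
    mu k.+1 = mu_next T alpha x mu s k.

(* Main.v *)
Require Import Defs.
From Stdlib Require Import Reals Lra Lia List Classical FunctionalExtensionality ClassicalEpsilon.
From mathcomp Require Import ssreflect ssrfun ssrbool eqtype ssrnat seq fintype bigop.
Open Scope R_scope.

Section Sums.
Variable I : Type.
Implicit Types (r : seq I) (F G : I -> R).

Lemma sumS_ge0 r F : (forall i, 0 <= F i) -> 0 <= \big[Rplus/0]_(i <- r) F i.
Proof. move=> H; elim: r => [|a r IH]; rewrite ?big_nil ?big_cons; [lra|]. have := H a; lra. Qed.

Lemma sumS_le r F G : (forall i, F i <= G i) -> \big[Rplus/0]_(i <- r) F i <= \big[Rplus/0]_(i <- r) G i.
Proof. move=> H; elim: r => [|a r IH]; rewrite ?big_nil ?big_cons; [lra|]. have := H a; lra. Qed.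

Lemma sumS_add r F G : \big[Rplus/0]_(i <- r) (F i + G i) = \big[Rplus/0]_(i <- r) F i + \big[Rplus/0]_(i <- r) G i.
Proof. elim: r => [|a r IH]; rewrite ?big_nil ?big_cons; [lra|]. rewrite IH; lra. Qed.

Lemma sumS_scal r c F : \big[Rplus/0]_(i <- r) (c * F i) = c * \big[Rplus/0]_(i <- r) F i.
Proof. elim: r => [|a r IH]; rewrite ?big_nil ?big_cons; [lra|]. rewrite IH; lra. Qed.

Lemma sumS_ext r F G : (forall i, F i = G i) -> \big[Rplus/0]_(i <- r) F i = \big[Rplus/0]_(i <- r) G i.
Proof. move=> H; elim: r => [|a r IH]; rewrite ?big_nil ?big_cons; [lra|]. rewrite IH H; lra. Qed.

Lemma sumS_const r c F : (forall i, F i <= c) -> \big[Rplus/0]_(i <- r) F i <= INR (size r) * c.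
Proof. move=> H; elim: r => [|a r IH]; rewrite ?big_nil ?big_cons; [simpl; lra|].
rewrite [size _]/= S_INR. have := H a; lra. Qed.
End Sums.

Lemma sumS_single (I : eqType) (r : seq I) F i : (forall j, 0 <= F j) -> i \in r ->
  F i <= \big[Rplus/0]_(j <- r) F j.
Proof. move=> H; elim: r => [|a r IH] //=; rewrite big_cons inE => /orP [/eqP->|/IH].
- have := sumS_ge0 _ r F H; lra.
- have := H a; lra. Qed.

Section Vec.
Variable n : nat.
Implicit Types u v w : vec n.

Definition ssq u := \big[Rplus/0]_(i < n) (u i * u i).
Lemma ssq_ge0 u : 0 <= ssq u.
Proof. apply: sumS_ge0 => i; nra. Qed.
Lemma norm_ssq u : norm u = sqrt (ssq u). Proof. by []. Qed.
Lemma norm_ge0 u : 0 <= norm u. Proof. apply sqrt_pos. Qed.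
Lemma norm_sq u : norm u * norm u = ssq u.
Proof. rewrite /norm sqrt_sqrt //; apply ssq_ge0. Qed.

Lemma norm_ext u v : (forall i, u i = v i) -> norm u = norm v.
Proof. move=> H; rewrite /norm (sumS_ext _ _ (fun i => u i * u i) (fun i => v i * v i)) //.
move=> i; by rewrite H. Qed.

Lemma coord_le u i : Rabs (u i) <= norm u.
Proof. rewrite /norm -sqrt_Rsqr_abs; apply sqrt_le_1_alt.
rewrite /Rsqr. apply: (sumS_single _ _ (fun j => u j * u j)); [move=> j; nra| apply mem_index_enum]. Qed.

Lemma norm_scal u v c : (forall i, v i = c * u i) -> norm v = Rabs c * norm u.
Proof. move=> H. rewrite /norm (sumS_ext _ _ (fun i => v i * v i) (fun i => (c*c) * (u i * u i))).
  rewrite sumS_scal sqrt_mult; [|nra|apply ssq_ge0]. rewrite sqrt_Rsqr_abs //.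
move=> i; rewrite H; ring. Qed.

Lemma cauchy_schwarz u v : let B := \big[Rplus/0]_(i < n) (u i * v i) in B * B <= ssq u * ssq v.
Proof. move=> B. set A := ssq u; set C := ssq v.
have H0 : 0 <= \big[Rplus/0]_(i < n) ((C * u i - B * v i) * (C * u i - B * v i)) by apply: sumS_ge0 => i; apply: Rle_0_sqr.
rewrite (sumS_ext _ _ _ (fun i => (C*C) * (u i * u i) + ((-2 * C * B) * (u i * v i) + (B*B) * (v i * v i)))) in H0; last by move=> i; ring.
rewrite !sumS_add !sumS_scal -/A -/B -/C in H0.
have hA : 0 <= A by apply ssq_ge0. have hC : 0 <= C by apply ssq_ge0.
case: (Req_dec C 0) => hC0.
- have hv : forall i, v i = 0.
    move=> i; have := coord_le v i; rewrite norm_ssq -/C hC0 sqrt_0 => h. have := Rabs_pos (v i).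
    move=> h2. case: (Rle_dec 0 (v i)) => h3; [rewrite Rabs_right in h; lra|rewrite Rabs_left in h; lra].
  rewrite /B (sumS_ext _ _ _ (fun i => 0 * 0)) ?sumS_scal; last by move=> i; rewrite hv; ring.
  rewrite hC0; nra.
- change (\big[Rplus/0]_(i < n) (u i * u i)) with A in H0.
  change (\big[Rplus/0]_(i < n) (v i * v i)) with C in H0.
  have h : C * (C * A - B * B) >= 0 by nra.
  have hCp : 0 < C by lra.
  have : C * A - B * B >= 0 by nra.
  nra. Qed.

Lemma norm_tri u v w : (forall i, w i = u i + v i) -> norm w <= norm u + norm v.
Proof. move=> H. have hu := norm_ge0 u; have hv := norm_ge0 v.
apply Rsqr_incr_0_var; [|nra]. rewrite /Rsqr norm_sq.
have := cauchy_schwarz u v. set B := \big[Rplus/0]_(i < n) (u i * v i) => cs.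
rewrite /ssq (sumS_ext _ _ _ (fun i => u i * u i + (2 * (u i * v i) + v i * v i))); last by move=> i; rewrite H; ring.
rewrite !sumS_add sumS_scal -/B -!/(ssq _) -!norm_sq.
have : B <= norm u * norm v.
  rewrite -!norm_sq in cs. have hp : 0 <= norm u * norm v by nra.
  case: (Rle_dec B 0) => hb; [nra|]. apply Rsqr_incr_0_var; rewrite /Rsqr; nra.
nra. Qed.
End Vec.

Set Implicit Arguments.

Lemma res_ge0 n (T : vec n -> vec n) z : 0 <= res T z.
Proof. apply sqrt_pos. Qed.

Lemma foldmax_ge0 (l : list R) : 0 <= List.fold_right Rmax 0 l.
Proof. elim: l => [|a l IH] /=; [lra|]. have := Rmax_r a (List.fold_right Rmax 0 l); lra. Qed.

Lemma foldmax_le (l : list R) c : 0 <= c -> (forall t, List.In t l -> t <= c) -> List.fold_right Rmax 0 l <= c.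
Proof. elim: l => [|a l IH] /= hc H; [lra|]. apply Rmax_lub; [apply H; by left|apply IH => // t ht; apply H; by right]. Qed.

Lemma foldmax_firstn (f : nat -> R) (l : list nat) a b : (a <= b)%nat ->
  List.fold_right Rmax 0 (map f (firstn a l)) <= List.fold_right Rmax 0 (map f (firstn b l)).
Proof. elim: l a b => [|h l IH] a b hab.
  rewrite !firstn_nil /=; lra.
case: a hab => [|a] hab; first by apply foldmax_ge0.
case: b hab => [//|b] hab /=.
have := IH a b hab. move: (List.fold_right _ _ _) (List.fold_right _ _ _) => p q hpq.
rewrite /Rmax; do 2 case: Rle_dec; lra. Qed.

Section S.
End S.

Lemma div_le a b c : 0 < b -> a <= c * b -> a / b <= c.
Proof. move=> hb h. have -> : c = (c * b) * / b by field; lra.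
rewrite /Rdiv; apply Rmult_le_compat_r => //; left; by apply Rinv_0_lt_compat. Qed.

Definition desc {n} (T : vec n -> vec n) alpha (x : nat -> vec n) (mu : nat -> R) k :=
  res T (x k.+1) <= alpha * mu k.

Lemma desc_y n T L alpha s (x y : nat -> vec n) mu k : safe_l2o T L alpha s x y mu -> (1 <= k)%nat ->
  res T (y k) <= alpha * mu k -> desc T alpha x mu k.
Proof. move=> [_ H] hk hy; have [_ [hx _]] := H k hk. rewrite /desc hx.
case: Rle_dec => // h; lra. Qed.

Lemma mu_nd n T L alpha s (x y : nat -> vec n) mu k : safe_l2o T L alpha s x y mu -> (1 <= k)%nat ->
  ~ desc T alpha x mu k -> mu k.+1 = mu k.
Proof. move=> [_ H] hk hd; have [_ [_ hm]] := H k hk. rewrite hm /mu_next.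
by case: descent_dec. Qed.

Lemma mu_d n T L alpha s (x y : nat -> vec n) mu k : safe_l2o T L alpha s x y mu -> (1 <= k)%nat ->
  desc T alpha x mu k ->
  mu k.+1 = match s with
    | GS theta => theta * mu k
    | RT => res T (x k.+1)
    | AA => (res T (x k.+1) + INR (aa_count T alpha x mu k) * mu k) / (INR (aa_count T alpha x mu k) + 1)
    | EMA theta => theta * res T (x k.+1) + (1 - theta) * mu k
    | RM m => List.fold_right Rmax 0 (map (fun j => res T (x j.+1)) (Xi T alpha x mu m k))
    end.
Proof. move=> [_ H] hk hd; have [_ [_ hm]] := H k hk. rewrite hm /mu_next.
by case: descent_dec. Qed.

Lemma mu_nonneg n T L alpha s (x y : nat -> vec n) mu : safe_l2o T L alpha s x y mu ->
  0 < alpha < 1 -> scheme_params s -> forall k, (1 <= k)%nat -> 0 <= mu k.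
Proof. move=> H ha hs; elim => [//|k IH] hk.
case: (posnP k) => [->|hk0]; first by rewrite (proj1 H); apply res_ge0.
have hk1 : (1 <= k)%nat by []. have IH' := IH hk1.
case: (classic (desc T alpha x mu k)) => hd; last by rewrite (mu_nd H hk1 hd).
rewrite (mu_d H hk1 hd). have hr := res_ge0 T (x k.+1).
move: hs; case: s H => [th|||th|m] H /= hs; try nra.
- have := pos_INR (aa_count T alpha x mu k) => hi.
  apply Rle_mult_inv_pos; nra.
- apply foldmax_ge0. Qed.

Lemma di_S n (T : vec n -> vec n) alpha x mu k :
  descent_indices T alpha x mu k.+1 =
  if descent_dec T alpha x mu k.+1 then k.+1 :: descent_indices T alpha x mu k else descent_indices T alpha x mu k.
Proof. by []. Qed.

Definition G {n} (T : vec n -> vec n) alpha x mu m k :=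
  List.fold_right Rmax 0 (map (fun j => res T (x j.+1)) (Xi T alpha x mu m k)).

Lemma rm_inv n T L alpha m (x y : nat -> vec n) mu : safe_l2o T L alpha (RM m) x y mu ->
  forall k, (1 <= k)%nat -> mu k.+1 = if descent_indices T alpha x mu k is nil then mu 1%nat else G T alpha x mu m k.
Proof. move=> H; elim => [//|k IH] _.
case: (classic (desc T alpha x mu k.+1)) => hd.
- rewrite (mu_d H _ hd) // di_S; case: descent_dec => // hd'.
- rewrite (mu_nd H _ hd) // /G /Xi di_S; case: descent_dec => //= hd' .
  case: (posnP k) => [->|hk0] //. by rewrite IH. Qed.

Lemma mu_mono_step n T L alpha s (x y : nat -> vec n) mu : safe_l2o T L alpha s x y mu ->
  0 < alpha < 1 -> scheme_params s -> forall k, (1 <= k)%nat -> mu k.+1 <= mu k.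
Proof. move=> H ha hs k hk. have hm := mu_nonneg H ha hs _ hk.
case: (classic (desc T alpha x mu k)) => hd; last by rewrite (mu_nd H hk hd); lra.
rewrite (mu_d H hk hd). have hr := res_ge0 T (x k.+1). rewrite /desc in hd.
have hrm : res T (x k.+1) <= mu k by nra.
move: hs; case: s H => [th|||th|m] H /= hs; try nra.
- have := pos_INR (aa_count T alpha x mu k) => hi.
  apply div_le; nra.
- case: k hk hm hd hrm {hr} => [//|k] hk hm hd hrm.
  rewrite /Xi di_S; case: descent_dec => // hd'.
  case: m hs H => [//|m] hs H /=. apply Rmax_lub; first nra.

  have hh := (foldmax_firstn (fun j => res T (x j.+1)) (descent_indices T alpha x mu k) _ _ (leqnSn m)).
  apply: (Rle_trans _ _ _ hh).
  case: (posnP k) => [hk0|hk0]; first by subst k; simpl; lra.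
  have := rm_inv H _ hk0. case E: (descent_indices T alpha x mu k) => [|a l].
  + by rewrite firstn_nil /=.
  + by move=> ->; rewrite /G /Xi E; lra. Qed.

Lemma mu_mono n T L alpha s (x y : nat -> vec n) mu : safe_l2o T L alpha s x y mu ->
  0 < alpha < 1 -> scheme_params s -> forall k j, (1 <= k)%nat -> (k <= j)%nat -> mu j <= mu k.
Proof. move=> H ha hs k j hk; elim: j => [|j IH] hj.
- by move: hk; rewrite leqn0 in hj; rewrite (eqP hj).
- case: (leqP k j) => hkj.
  + have := mu_mono_step H ha hs _ (leq_trans hk hkj). have := IH hkj. lra.
  + have -> : k = j.+1 by apply/eqP; rewrite eqn_leq hj hkj. lra. Qed.

Lemma inf_desc n T L alpha s (x y : nat -> vec n) mu : safe_l2o T L alpha s x y mu ->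
  (forall N : nat, exists k : nat, (N <= k)%nat /\ res T (y k) <= alpha * mu k) ->
  forall N, exists k, (N <= k)%nat /\ (1 <= k)%nat /\ desc T alpha x mu k.
Proof. move=> H Hi N; have [k [hk hy]] := Hi (maxn N 1).
exists k; rewrite geq_max in hk; case/andP: hk => h1 h2; split => //; split => //.
exact: desc_y H h2 hy. Qed.

Lemma cv_small (mu : nat -> R) : (forall k, (1 <= k)%nat -> 0 <= mu k) ->
  (forall k j, (1 <= k)%nat -> (k <= j)%nat -> mu j <= mu k) ->
  (forall eps, 0 < eps -> exists k, (1 <= k)%nat /\ mu k < eps) -> Un_cv mu 0.
Proof. move=> h0 hm hs eps he. have [k [hk hk2]] := hs eps he.
exists k => j hj; rewrite /R_dist Rminus_0_r. have hj' : (k <= j)%nat by apply/leP.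
have := hm k j hk hj'. have := h0 j (leq_trans hk hj'). move=> a b.
rewrite Rabs_right; lra. Qed.

Lemma small_factor (mu : nat -> R) q : 0 <= q < 1 -> (forall k, (1 <= k)%nat -> 0 <= mu k) ->
  (forall k0, (1 <= k0)%nat -> exists k, (k0 <= k)%nat /\ mu k <= q * mu k0) ->
  forall eps, 0 < eps -> exists k, (1 <= k)%nat /\ mu k < eps.
Proof. move=> hq h0 hf.
have it : forall J, exists k, (1 <= k)%nat /\ mu k <= q ^ J * mu 1%nat.
  elim => [|J [k [hk hk2]]]; first by exists 1%nat; split => //=; lra.
  have [k' [hk' hk'2]] := hf k hk. exists k'; split; first exact: leq_trans hk hk'.
  rewrite /= Rmult_assoc. have := h0 k hk. nra.
move=> eps he. have h1 := h0 1%nat (leqnn 1).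
have [J HJ] : exists J, Rabs (q ^ J) < eps / (mu 1%nat + 1).
  have [N hN] := pow_lt_1_zero q (ltac:(rewrite Rabs_right; lra)) (eps / (mu 1%nat + 1)) (ltac:(apply Rdiv_lt_0_compat; lra)).
  exists N; apply hN; lia.
have [k [hk hk2]] := it J. exists k; split => //.
have hqJ : 0 <= q ^ J by apply pow_le; lra.
rewrite Rabs_right in HJ; last lra.
have : q ^ J * (mu 1%nat + 1) < eps.
  have := Rmult_lt_compat_r (mu 1%nat + 1) _ _ (ltac:(lra)) HJ. rewrite /Rdiv Rmult_assoc Rinv_l; lra.
nra. Qed.

Definition qf (alpha : R) (s : scheme) : R :=
  match s with GS th => th | RT => alpha | EMA th => 1 - th * (1 - alpha) | _ => alpha end.

Lemma factor_simple n T L alpha s (x y : nat -> vec n) mu : safe_l2o T L alpha s x y mu ->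
  0 < alpha < 1 -> scheme_params s -> s <> AA -> (forall m, s <> RM m) ->
  (forall N : nat, exists k : nat, (N <= k)%nat /\ res T (y k) <= alpha * mu k) ->
  0 <= qf alpha s < 1 /\
  forall k0, (1 <= k0)%nat -> exists k, (k0 <= k)%nat /\ mu k <= qf alpha s * mu k0.
Proof. move=> H ha hs hAA hRM Hi. split.
  by move: hs hAA hRM; case: s H => [th|||th|m] H /= hs hAA hRM; try nra; try (exfalso; by apply: hAA); try (exfalso; by apply: (hRM _)).
move=> k0 hk0. have [j [hj [hj1 hd]]] := inf_desc H Hi k0.
exists j.+1; split; first exact: leqW.
have hm := mu_mono H ha hs _ _ hk0 hj. have hmj := mu_nonneg H ha hs _ hj1.
rewrite (mu_d H hj1 hd). rewrite /desc in hd. have hr := res_ge0 T (x j.+1).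
move: hs hAA hRM; case: s H => [th|||th|m] H /= hs hAA hRM; try (exfalso; by apply: hAA); try (exfalso; by apply: (hRM _)).
- nra.
- nra.
- have h1 : th * res T (x j.+1) <= th * (alpha * mu j) by apply Rmult_le_compat_l; lra.
  have h2 : 0 <= 1 - th * (1 - alpha) by nra.
  have h3 : (1 - th * (1 - alpha)) * mu j <= (1 - th * (1 - alpha)) * mu k0 by apply Rmult_le_compat_l.
  nra. Qed.

Fixpoint seg {n} (T : vec n -> vec n) alpha x mu (k0 k : nat) : list nat :=
  match k with
  | O => nil
  | S k' => if (k0 <= S k')%nat then
              (if descent_dec T alpha x mu (S k') then S k' :: seg T alpha x mu k0 k' else seg T alpha x mu k0 k')
            else nil
  end.

Lemma di_split n (T : vec n -> vec n) alpha x mu k0 : forall k, (k0 <= k.+1)%nat ->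
  descent_indices T alpha x mu k = seg T alpha x mu k0 k ++ descent_indices T alpha x mu k0.-1.
Proof. elim => [|k IH] hk.
- by case: k0 hk => [|[|k0]].
- rewrite di_S /=. case: (leqP k0 k.+1) => h.
  + case: (descent_dec T alpha x mu k.+1) => _ /=; by rewrite IH.
  + have -> : k0 = k.+2 by apply/eqP; rewrite eqn_leq hk h.
    rewrite /= -di_S; reflexivity. Qed.

Lemma seg_in n (T : vec n -> vec n) alpha x mu k0 : forall k j, List.In j (seg T alpha x mu k0 k) ->
  (k0 <= j)%nat /\ (j <= k)%nat /\ (1 <= j)%nat /\ desc T alpha x mu j.
Proof. elim => [|k IH] j //=. case: ifP => h //. case: descent_dec => hd /=.
- case => [<-|/IH [a [b [c d]]]]; first by split.
  by split => //; split => //; apply: leqW.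
- move=> /IH [a [b [c d]]]; by split => //; split => //; apply: leqW. Qed.

Lemma seg_len n (T : vec n -> vec n) alpha x mu k0 k : forall j, (k <= j)%nat ->
  (length (seg T alpha x mu k0 k) <= length (seg T alpha x mu k0 j))%nat.
Proof. elim => [|j IH] hj.
- by rewrite leqn0 in hj; rewrite (eqP hj).
- case: (leqP k j) => hkj.
  + apply: leq_trans (IH hkj) _. rewrite /=. case: ifP => h.
    * by case: descent_dec.
    * have : (k0 <= j)%nat = false by apply/negbTE; rewrite -ltnNge; apply: ltnW; rewrite ltnNge h.
      by case: j {IH hj hkj h} => [|j] //= ->.
  + have -> : k = j.+1 by apply/eqP; rewrite eqn_leq hj hkj. by []. Qed.

Lemma seg_long n T L alpha s (x y : nat -> vec n) mu k0 : safe_l2o T L alpha s x y mu ->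
  (forall N : nat, exists k : nat, (N <= k)%nat /\ res T (y k) <= alpha * mu k) ->
  forall c, exists k, (c <= length (seg T alpha x mu k0 k))%nat.
Proof. move=> H Hi; elim => [|c [k hk]]; first by exists 0%nat.
have [j [hj [hj1 hd]]] := inf_desc H Hi (maxn k.+1 k0).
rewrite geq_max in hj; case/andP: hj => hkj hk0j.
case: j hkj hk0j hj1 hd => [|j] // hkj hk0j _ hd.
exists j.+1. rewrite /=. rewrite hk0j. case: (descent_dec T alpha x mu j.+1) => [_|hd'] /=; last by case: hd'.
rewrite ltnS. apply: leq_trans hk _. apply: seg_len; exact: hkj. Qed.

Lemma In_firstn (A : Type) (a : A) k l : List.In a (firstn k l) -> List.In a l.
Proof. elim: l k => [|h l IH] [|k] //=. case => [->|/IH]; [by left|by right]. Qed.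

Lemma foldmax_map_le (f : nat -> R) l c : 0 <= c -> (forall j, List.In j l -> f j <= c) ->
  List.fold_right Rmax 0 (map f l) <= c.
Proof. elim: l => [|a l IH] /= hc H; [lra|]. apply Rmax_lub; [apply H; by left|apply IH => // t ht; apply H; by right]. Qed.

Lemma factor_RM n T L alpha m (x y : nat -> vec n) mu : safe_l2o T L alpha (RM m) x y mu ->
  0 < alpha < 1 -> (1 <= m)%nat ->
  (forall N : nat, exists k : nat, (N <= k)%nat /\ res T (y k) <= alpha * mu k) ->
  forall k0, (1 <= k0)%nat -> exists k, (k0 <= k)%nat /\ mu k <= alpha * mu k0.
Proof. move=> H ha hm Hi k0 hk0.
have hs : scheme_params (RM m) by [].
have [k hk] := seg_long k0 H Hi m.
case E : (seg T alpha x mu k0 k) => [|j0 l]; first by rewrite E /= in hk; have := leq_trans hm hk.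
have [a [b _]] : (k0 <= j0)%nat /\ (j0 <= k)%nat /\ _ := @seg_in n T alpha x mu k0 k j0 (ltac:(rewrite E; by left)).
have hkk : (k0 <= k)%nat by apply: leq_trans a b.
exists k.+1; split; first exact: leqW.
have hk1 : (1 <= k)%nat by apply: leq_trans hk0 hkk.
have hsp := @di_split n T alpha x mu k0 k (ltac:(exact: leqW)).
rewrite (rm_inv H _ hk1) hsp E /= /G /Xi hsp firstn_app.
have hk' := (elimT leP hk).
have -> : (m - length (seg T alpha x mu k0 k))%coq_nat = 0%nat by lia.
rewrite /= app_nil_r. apply: foldmax_map_le.
  have := mu_nonneg H ha hs _ hk0; nra.
move=> j hj; have [h1 [h2 [h3 h4]]] := @seg_in n T alpha x mu k0 k j (In_firstn _ _ _ hj).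
rewrite /desc in h4. have := mu_mono H ha hs _ _ hk0 h1. have := mu_nonneg H ha hs _ h3. nra. Qed.

Fixpoint Hm (m : nat) : R := match m with O => 0 | S m' => Hm m' + / (INR m' + 1) end.

Lemma Hm_mono m j : (m <= j)%nat -> Hm m <= Hm j.
Proof. elim: j => [|j IH] hj; first by rewrite leqn0 in hj; rewrite (eqP hj); lra.
case: (leqP m j) => h.
- have := IH h. have : 0 < / (INR j + 1) by apply Rinv_0_lt_compat; have := pos_INR j; lra.
  rewrite /=; lra.
- have -> : m = j.+1 by apply/eqP; rewrite eqn_leq hj h. lra. Qed.

Lemma Hblock m j : (1 <= m)%nat -> (j <= m)%nat -> Hm m + INR j / (2 * INR m) <= Hm (m + j)%coq_nat.
Proof. move=> hm; elim: j => [|j IH] hj.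
- rewrite /= Nat.add_0_r; lra.
- have hm' : 1 <= INR m by apply (le_INR 1); apply/leP.
  have := IH (ltnW hj). rewrite Nat.add_succ_r [Hm (S _)]/= S_INR.
  have hjm : INR j + 1 <= INR m by rewrite -S_INR; apply le_INR; apply/leP.
  have hinv : / (2 * INR m) <= / (INR (m + j)%coq_nat + 1).
    apply Rinv_le_contravar; [rewrite plus_INR; have := pos_INR j; lra|rewrite plus_INR; lra].
  rewrite /Rdiv Rmult_plus_distr_r Rmult_1_l. lra. Qed.

Lemma Hm_pow K : INR K / 2 <= Hm (Nat.pow 2 K).
Proof. elim: K => [|K IH]; first by rewrite /=; lra.
have h1 : (1 <= (Nat.pow 2 K))%nat by apply/leP; apply Nat.neq_0_lt_0; apply Nat.pow_nonzero.
have := @Hblock _ (Nat.pow 2 K) h1 (leqnn _).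
have -> : (Nat.pow 2 K.+1) = ((Nat.pow 2 K) + (Nat.pow 2 K))%coq_nat by rewrite Nat.pow_succ_r'; lia.
have hp : 0 < INR (Nat.pow 2 K) by apply lt_0_INR; apply/leP.
have -> : INR (Nat.pow 2 K) / (2 * INR (Nat.pow 2 K)) = / 2 by field; lra.
rewrite S_INR; lra. Qed.

Lemma Hm_unb B : exists m, B < Hm m.
Proof. have [K hK] := INR_unbounded (2 * B). exists (Nat.pow 2 K). have := Hm_pow K. lra. Qed.

Lemma aa_S n (T : vec n -> vec n) alpha x mu k : (1 <= k)%nat ->
  aa_count T alpha x mu k.+1 = (aa_count T alpha x mu k + (if descent_dec T alpha x mu k then 1 else 0))%nat.
Proof. by case: k. Qed.

Lemma aa_mono n (T : vec n -> vec n) alpha x mu k j : (1 <= k)%nat -> (k <= j)%nat ->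
  (aa_count T alpha x mu k <= aa_count T alpha x mu j)%nat.
Proof. move=> hk; elim: j => [|j IH] hj; first by rewrite leqn0 in hj; rewrite (eqP hj).
case: (leqP k j) => h.
- rewrite aa_S; last exact: leq_trans hk h. apply: leq_trans (IH h) _. apply: leq_addr.
- have -> : k = j.+1 by apply/eqP; rewrite eqn_leq hj h. by []. Qed.

Lemma aa_unb n T L alpha (x y : nat -> vec n) mu : safe_l2o T L alpha AA x y mu ->
  (forall N : nat, exists k : nat, (N <= k)%nat /\ res T (y k) <= alpha * mu k) ->
  forall M, exists k, (1 <= k)%nat /\ (M <= aa_count T alpha x mu k)%nat.
Proof. move=> H Hi; elim => [|M [k [hk hM]]]; first by exists 1%nat.
have [j [hj [hj1 hd]]] := inf_desc H Hi k. exists j.+1; split => //.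
rewrite aa_S //. destruct (descent_dec T alpha x mu j) as [hd0|hd'] =>/=; last by case: hd'. rewrite addn1 ltnS.
apply: leq_trans hM _. exact: aa_mono. Qed.

Lemma small_AA n T L alpha (x y : nat -> vec n) mu : safe_l2o T L alpha AA x y mu ->
  0 < alpha < 1 ->
  (forall N : nat, exists k : nat, (N <= k)%nat /\ res T (y k) <= alpha * mu k) ->
  forall eps, 0 < eps -> exists k, (1 <= k)%nat /\ mu k < eps.
Proof. move=> H ha Hi eps he. apply: NNPP => hne.
have hge : forall k, (1 <= k)%nat -> eps <= mu k.
  move=> k hk; apply Rnot_lt_le => hlt; apply: hne; by exists k.
set c := (1 - alpha) * eps. have hc : 0 < c by rewrite /c; nra.
have pot : forall k, (1 <= k)%nat -> mu k + c * Hm (aa_count T alpha x mu k) <= mu 1%nat.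
  elim => [//|k IH] hk. case: (posnP k) => [->|hk0]; first by rewrite /=; lra.
  have IH' := IH hk0. have hmk := hge k hk0.
  case: (classic (desc T alpha x mu k)) => hd.
  + rewrite (mu_d H hk0 hd) aa_S //. case: descent_dec => // hd' /=.
    rewrite addn1 /=.
    set M := aa_count T alpha x mu k in IH' *.
    have hM := pos_INR M.
    have : (res T (x k.+1) + INR M * mu k) / (INR M + 1) + c * / (INR M + 1) <= mu k.
      rewrite /Rdiv -Rmult_plus_distr_r. rewrite -/(Rdiv _ _). apply div_le; first lra.
      rewrite /c; nra.
    nra.
  + rewrite (mu_nd H hk0 hd) aa_S //. case: descent_dec => // hd' /=. rewrite addn0. lra.
have h1 := hge 1%nat (leqnn 1).
have [M hM] := Hm_unb (mu 1%nat / c).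
have [k [hk hMk]] := aa_unb H Hi M.
have := pot k hk. have := Hm_mono _ _ hMk. have := hge k hk.
have : c * (mu 1%nat / c) = mu 1%nat by field; lra.
nra. Qed.

Lemma mu_small n T L alpha s (x y : nat -> vec n) mu : safe_l2o T L alpha s x y mu ->
  0 < alpha < 1 -> scheme_params s ->
  (forall N : nat, exists k : nat, (N <= k)%nat /\ res T (y k) <= alpha * mu k) ->
  forall eps, 0 < eps -> exists k, (1 <= k)%nat /\ mu k < eps.
Proof. move=> H ha hs Hi.
case E: s H hs => [th|||th|m] H hs.
- have [hq hf] := factor_simple H ha hs (ltac:(by [])) (ltac:(by [])) Hi.
  exact: small_factor hq (mu_nonneg H ha hs) hf.
- have [hq hf] := factor_simple H ha hs (ltac:(by [])) (ltac:(by [])) Hi.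
  exact: small_factor hq (mu_nonneg H ha hs) hf.
- exact: small_AA H ha Hi.
- have [hq hf] := factor_simple H ha hs (ltac:(by [])) (ltac:(by [])) Hi.
  exact: small_factor hq (mu_nonneg H ha hs) hf.
- apply: (@small_factor mu alpha _ (mu_nonneg H ha hs)); first lra.
  exact: factor_RM H ha hs Hi. Qed.

Lemma mu_cv n T L alpha s (x y : nat -> vec n) mu : safe_l2o T L alpha s x y mu ->
  0 < alpha < 1 -> scheme_params s ->
  (forall N : nat, exists k : nat, (N <= k)%nat /\ res T (y k) <= alpha * mu k) ->
  Un_cv mu 0.
Proof. move=> H ha hs Hi. apply: cv_small.
- exact: mu_nonneg H ha hs.
- exact: mu_mono H ha hs.
- exact: mu_small H ha hs Hi. Qed.

Unset Implicit Arguments.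

Lemma size_index_ord n : size (index_enum 'I_n) = n.
Proof. rewrite -(filter_predT (index_enum _)) deprecated_filter_index_enum -cardE. apply: card_ord. Qed.

Lemma norm_sym n (u v : vec n) : norm (vsub u v) = norm (vsub v u).
Proof. rewrite (@norm_scal n (vsub u v) (vsub v u) (-1)); last by move=> i; rewrite /vsub; ring.
rewrite Rabs_Ropp Rabs_R1; lra. Qed.

Lemma tri3 n (a b c : vec n) : norm (vsub a c) <= norm (vsub a b) + norm (vsub b c).
Proof. apply: (@norm_tri n (vsub a b) (vsub b c)) => i; rewrite /vsub; ring. Qed.

Lemma T_nonexp n (T : vec n -> vec n) : averaged T -> forall a b, norm (vsub (T a) (T b)) <= norm (vsub a b).
Proof. move=> [lam [Q [hl [hQ hT]]]] a b.
have := @norm_tri n (fun i => (1 - lam) * vsub a b i) (fun i => lam * vsub (Q a) (Q b) i) (vsub (T a) (T b)).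
rewrite (@norm_scal n (vsub a b) (fun i => (1 - lam) * vsub a b i) (1 - lam)) //.
rewrite (@norm_scal n (vsub (Q a) (Q b)) (fun i => lam * vsub (Q a) (Q b) i) lam) //.
rewrite !Rabs_right; try lra. have := hQ a b. move=> h1 h2.
have : norm (vsub (T a) (T b)) <= (1 - lam) * norm (vsub a b) + lam * norm (vsub (Q a) (Q b)).
  apply: h2 => i; rewrite /vsub !hT; ring.
nra. Qed.

Lemma res_lip n (T : vec n -> vec n) : averaged T -> forall a z, res T z <= res T a + 2 * norm (vsub a z).
Proof. move=> hT a z. rewrite /res.
have h1 := @tri3 n z a (T z). have h2 := @tri3 n a (T a) (T z). have h3 := @T_nonexp n T hT a z.
rewrite (@norm_sym n z a) in h1. lra. Qed.

Lemma res0_fix n (T : vec n -> vec n) z : res T z <= 0 -> Fix T z.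
Proof. move=> h. rewrite /Fix; apply: functional_extensionality => i.
have := @coord_le n (vsub z (T z)) i. rewrite -/(res T z) /vsub => h2.
have := Rabs_pos (z i - T z i). move=> h3.
case: (Rle_dec 0 (z i - T z i)) => h4; [rewrite Rabs_right in h2; lra|rewrite Rabs_left in h2; lra]. Qed.

Lemma small_norm n : forall eps, 0 < eps -> exists d, 0 < d /\ forall u : vec n, (forall i, Rabs (u i) < d) -> norm u < eps.
Proof. move=> eps he. have hn := pos_INR n. set d := eps / (INR n + 1).
have hd : 0 < d by apply Rdiv_lt_0_compat; lra.
have hed : eps = d * (INR n + 1) by rewrite /d; field; lra.
clearbody d. exists d; split => // u hu.
have hs : ssq n u <= INR n * (d * d).
  have hb : forall i, u i * u i <= d * d.
    move=> i. have h1 := Rabs_pos (u i). have h2 := hu i.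
    have e : Rabs (u i * u i) = Rabs (u i) * Rabs (u i) by rewrite Rabs_mult.
    have h3 : u i * u i <= Rabs (u i * u i) by apply RRle_abs.
    have h4 : Rabs (u i) * Rabs (u i) <= d * d by apply Rmult_le_compat; lra.
    lra.
  have := @sumS_const _ (index_enum 'I_n) (d*d) (fun i => u i * u i) hb.
  by rewrite size_index_ord.
rewrite (@norm_ssq n). rewrite -(sqrt_Rsqr eps); last lra.
apply sqrt_lt_1_alt; split; first exact: (@ssq_ge0 n).
rewrite /Rsqr hed. nra. Qed.

Definition infi (P : nat -> Prop) := forall N, exists k, (N <= k)%nat /\ P k.

Lemma BW1 (P : nat -> Prop) (f : nat -> R) B : infi P -> (forall k, P k -> Rabs (f k) <= B) ->
  exists a, forall eps, 0 < eps -> forall N, exists k, (N <= k)%nat /\ P k /\ Rabs (f k - a) < eps.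
Proof. move=> hP hB.
set E := fun t => forall N, exists k, (N <= k)%nat /\ P k /\ t <= f k.
have hEd : forall t t', t' <= t -> E t -> E t'.
  move=> t t' h ht N. have [k [h1 [h2 h3]]] := ht N. exists k; split => //; split => //; lra.
have hb : bound E.
  exists B => t ht. have [k [_ [h2 h3]]] := ht 0%nat. have := hB k h2. have := Rle_abs (f k). lra.
have hne : exists t, E t.
  exists (- B) => N. have [k [h1 h2]] := hP N. exists k; split => //; split => //.
  have := hB k h2. have := Rle_abs (- f k). rewrite Rabs_Ropp. lra.
have [a [hau hal]] := completeness E hb hne.
exists a => eps he N.
have h1 : ~ E (a + eps / 2).
  move=> h. have := hau _ h. lra.
have [N1 hN1] : exists N1, forall k, (N1 <= k)%nat -> P k -> f k < a + eps / 2.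
  apply: NNPP => hn. apply: h1 => N0. apply: NNPP => hn2. apply: hn. exists N0 => k hk hPk.
  apply: Rnot_le_lt => hle. apply: hn2. by exists k.
have h2 : E (a - eps / 2).
  apply: NNPP => hn. have : is_upper_bound E (a - eps / 2).
    move=> t ht. apply: Rnot_lt_le => hlt. apply: hn. apply: (hEd t) => //; lra.
  move/hal. lra.
have [k [hk [hPk hfk]]] := h2 (maxn N N1).
rewrite geq_max in hk; case/andP: hk => hkN hkN1.
exists k; split => //; split => //. have := hN1 k hkN1 hPk.
move=> h3. apply Rabs_def1; lra. Qed.

Lemma extract (P : nat -> Prop) (f : nat -> R) a :
  (forall eps, 0 < eps -> forall N, exists k, (N <= k)%nat /\ P k /\ Rabs (f k - a) < eps) ->
  exists P' : nat -> Prop, (forall k, P' k -> P k) /\ infi P' /\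
    forall eps, 0 < eps -> exists N, forall k, (N <= k)%nat -> P' k -> Rabs (f k - a) < eps.
Proof. move=> H.
have G : forall j N : nat, {k | (N <= k)%nat /\ P k /\ Rabs (f k - a) < / (INR j + 1)}.
  move=> j N; apply: constructive_indefinite_description; apply: H.
  apply Rinv_0_lt_compat; have := pos_INR j; lra.
pose phi := fix phi (j : nat) : nat := match j with O => sval (G O O) | S j' => sval (G (S j') (S (phi j'))) end.
have phiP : forall j, P (phi j) /\ Rabs (f (phi j) - a) < / (INR j + 1).
  case => [|j]; [exact: (proj2 (proj2_sig (G 0%nat 0%nat)))|exact: (proj2 (proj2_sig (G j.+1 (phi j).+1)))].
have philt : forall j, (phi j < phi j.+1)%nat.
  move=> j /=; by have [h1 _] := proj2_sig (G j.+1 (phi j).+1).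
have phimono : forall j j', (j <= j')%nat -> (phi j <= phi j')%nat.
  move=> j; elim => [|j' IH] h; first by rewrite leqn0 in h; rewrite (eqP h).
  case: (leqP j j') => h2; first by apply: leq_trans (IH h2) (ltnW (philt j')).
  by have -> : j = j'.+1 by apply/eqP; rewrite eqn_leq h h2.
have phige : forall j, (j <= phi j)%nat.
  elim => [//|j IH]. apply: leq_ltn_trans IH (philt j).
exists (fun k => exists j, phi j = k). split; [|split].
- move=> k [j <-]; exact: (proj1 (phiP j)).
- move=> N; exists (phi N); split; [exact: phige|by exists N].
- move=> eps he. have [J hJ] := INR_unbounded (/ eps).
  have hJ' : / (INR J + 1) < eps.
    have hie : 0 < / eps by apply Rinv_0_lt_compat.
    rewrite -(Rinv_inv eps). apply Rinv_lt_contravar; first nra. lra.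
  exists (phi J).+1 => k hk [j hj]. subst k.
  have hjJ : (J < j)%nat.
    rewrite ltnNge; apply/negP => hle. have := phimono _ _ hle. rewrite leqNgt hk. by [].
  have := proj2 (phiP j). have : / (INR j + 1) <= / (INR J + 1).
    apply Rinv_le_contravar; first (have := pos_INR J; lra).
    have : INR J <= INR j by apply le_INR; apply/leP; apply: ltnW. lra.
  lra. Qed.

Lemma BWn n (P : nat -> Prop) (u : nat -> vec n) B : infi P -> (forall k, P k -> norm (u k) <= B) ->
  exists z, forall eps, 0 < eps -> forall N, exists k, (N <= k)%nat /\ P k /\ norm (vsub (u k) z) < eps.
Proof. move=> hP hB.
have claim : forall l : seq 'I_n, exists (P' : nat -> Prop) (z : vec n), (forall k, P' k -> P k) /\ infi P' /\
    forall eps, 0 < eps -> exists N, forall k, (N <= k)%nat -> P' k -> forall i, i \in l -> Rabs (u k i - z i) < eps.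
  elim => [|i l [P1 [z1 [h1 [h2 h3]]]]].
    exists P, (fun _ => 0); split => //; split => // eps he; by exists 0%nat.
  have hb1 : forall k, P1 k -> Rabs (u k i) <= B.
    move=> k hk. have := @coord_le n (u k) i. have := hB k (h1 k hk). lra.
  have [a ha] := @BW1 P1 (fun k => u k i) B h2 hb1.
  have [P2 [g1 [g2 g3]]] := @extract P1 (fun k => u k i) a ha.
  exists P2, (fun j => if j == i then a else z1 j). split; first by move=> k /g1 /h1.
  split => // eps he. have [N1 hN1] := h3 eps he. have [N2 hN2] := g3 eps he.
  exists (maxn N1 N2) => k hk hk2 j. rewrite geq_max in hk; case/andP: hk => hk1 hk2'.
  rewrite inE; case: eqP => [->|hne] /=; first by move=> _; apply: hN2.
  move=> hj. apply: hN1 => //; exact: g1.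
have [P' [z [h1 [h2 h3]]]] := claim (index_enum 'I_n).
exists z => eps he N. have [d [hd hdn]] := @small_norm n eps he.
have [N1 hN1] := h3 d hd. have [k [hk hPk]] := h2 (maxn N N1).
rewrite geq_max in hk; case/andP: hk => hkN hkN1.
exists k; split => //; split; first exact: h1.
apply: hdn => i; rewrite /vsub. apply: hN1 => //. exact: mem_index_enum. Qed.

Set Implicit Arguments.
Arguments T_nonexp {n T}. Arguments res_lip {n T}. Arguments res0_fix {n T z}.

Lemma res_step n T L alpha s (x y : nat -> vec n) mu : averaged T -> safe_l2o T L alpha s x y mu ->
  forall k, (1 <= k)%nat -> res T (x k.+1) <= res T (x k) \/ res T (x k.+1) <= alpha * mu k.
Proof. move=> hT [_ H] k hk. have [_ [hx _]] := H k hk. rewrite hx.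
case: Rle_dec => h; [by right|left]. rewrite /res /=. exact: (T_nonexp hT (x k) (T (x k))). Qed.

Lemma res_cv n T L alpha s (x y : nat -> vec n) mu : averaged T -> safe_l2o T L alpha s x y mu ->
  0 < alpha < 1 -> scheme_params s ->
  (forall N : nat, exists k : nat, (N <= k)%nat /\ res T (y k) <= alpha * mu k) ->
  forall eps, 0 < eps -> exists N, forall k, (N <= k)%nat -> res T (x k) < eps.
Proof. move=> hT H ha hs Hi eps he.
have [K [hK hmK]] := mu_small H ha hs Hi he.
have [j [hj [hj1 hd]]] := inf_desc H Hi K.
exists j.+1. elim => [//|k IH] hk.
have hmk : forall i, (K <= i)%nat -> alpha * mu i < eps.
  move=> i hi. have := mu_mono H ha hs _ _ hK hi. have := mu_nonneg H ha hs _ (leq_trans hK hi). nra.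
case: (leqP k j) => h.
- have -> : k = j by apply/eqP; rewrite eqn_leq h. have := hmk j hj. rewrite /desc in hd. lra.
- have hk1 : (1 <= k)%nat by apply: leq_trans hj1 (ltnW h).
  case: (res_step hT H _ hk1) => h2.
  + have := IH h. lra.
  + have := hmk k (leq_trans hj (ltnW h)). lra. Qed.

Lemma cluster_fix n (T : vec n -> vec n) (x : nat -> vec n) z : averaged T ->
  (forall eps, 0 < eps -> exists N, forall k, (N <= k)%nat -> res T (x k) < eps) ->
  (forall eps, 0 < eps -> forall N, exists k, (N <= k)%nat /\ norm (vsub (x k) z) < eps) ->
  Fix T z.
Proof. move=> hT hr hc. apply: res0_fix. apply: Rnot_lt_le => hpos.
have he : 0 < res T z / 4 by lra.
have [N hN] := hr _ he. have [k [hk hk2]] := hc _ he N.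
have := res_lip hT (x k) z. have := hN k hk. lra. Qed.

Theorem corollary1 (n : nat) (T : vec n -> vec n) (L : nat -> vec n -> vec n)
  (alpha : R) (s : scheme) (x y : nat -> vec n) (mu : nat -> R) :
  averaged T ->
  (exists p, Fix T p) ->
  (forall M : R, exists R0 : R, forall z : vec n, R0 <= norm z -> M <= res T z) ->
  0 < alpha < 1 ->
  scheme_params s ->
  safe_l2o T L alpha s x y mu ->
  (forall N : nat, exists k : nat, (N <= k)%nat /\ res T (y k) <= alpha * mu k) ->
  Un_cv mu 0 /\
  (forall d : nat -> R, (forall k, is_inf (dists (Fix T) (x k)) (d k)) -> Un_cv d 0) /\
  ((exists! z, cluster_point x z) -> exists p, Fix T p /\ converges_to x p).
Proof.
move=> hT _ hcoer ha hs H Hi.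
have hr := res_cv hT H ha hs Hi.
have [R0 hR0] := hcoer 1.
have [Nb hNb] := hr 1 Rlt_0_1.
have hbd : forall k, (Nb <= k)%nat -> norm (x k) <= R0.
  move=> k hk. apply: Rnot_lt_le => h. have := hR0 (x k) (Rlt_le _ _ h). have := hNb k hk. lra.
split; first exact: mu_cv H ha hs Hi.
split.
- move=> d hd eps he. apply: NNPP => hne.
  set P := fun k => (Nb <= k)%nat /\ eps <= Rabs (d k).
  have hP : infi P.
    move=> N. apply: NNPP => hn. apply: hne. exists (maxn N Nb) => k hk.
    have hk' : (maxn N Nb <= k)%nat by apply/leP.
    rewrite geq_max in hk'; case/andP: hk' => h1 h2.
    rewrite /R_dist Rminus_0_r. apply: Rnot_le_lt => hle. apply: hn. exists k; split => //.
  have [z hz] := @BWn n P x R0 hP (fun k hk => hbd k (proj1 hk)).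
  have hfz : Fix T z.
    apply: (cluster_fix _ _ hT hr) => e he' N. have [k [h1 [_ h3]]] := hz e he' N. by exists k.
  have [k [_ [[_ hPk] hk]]] := hz eps he 0%nat.
  have [hlow hup] := hd k.
  have h1 : d k <= norm (vsub (x k) z) by apply: hlow; exists z.
  have h2 : 0 <= d k. apply: hup => t [w [_ ->]]. apply: norm_ge0.
  rewrite Rabs_right in hPk; lra.
- move=> [z0 [hc0 huniq]]. exists z0.
  have hf : Fix T z0 by apply: (cluster_fix _ _ hT hr) => e he N; apply: hc0.
  split => // eps he. apply: NNPP => hne.
  set P := fun k => (Nb <= k)%nat /\ eps <= norm (vsub (x k) z0).
  have hP : infi P.
    move=> N. apply: NNPP => hn. apply: hne. exists (maxn N Nb) => k hk.
    rewrite geq_max in hk; case/andP: hk => h1 h2.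
    apply: Rnot_le_lt => hle. apply: hn. exists k; split => //.
  have [z hz] := @BWn n P x R0 hP (fun k hk => hbd k (proj1 hk)).
  have hcz : cluster_point x z.
    move=> e he' N. have [k [h1 [_ h3]]] := hz e he' N. by exists k.
  have ez := huniq z hcz. subst z.
  have [k [_ [[_ hPk] hk]]] := hz eps he 0%nat. lra.
Qed.
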